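(* Let $N$ be a finite nonempty set, $p\notin N$ and $N'=N\cup\{p\}$. Let $\mathscr{C}=\{S_1,\dots,S_k\}$ be a minimal balanced collection on $N$ with (unique) balancing weights $(\lambda_{S_i})_{i\in[k]}$. Let $I\subseteq[k]$ satisfy $\lambda_I:=\sum_{i\in I}\lambda_{S_i}<1$. Then $$\mathscr{C}'=\{S_i\cup\{p\}\mid i\in I\}\cup\{S_i\mid i\in[k]\setminus I\}\cup\{\{p\}\}$$ is a minimal balanced collection on $N'$ (with balancing weights $\lambda_{S_i}$ for the sets coming from $S_i$ and $1-\lambda_I$ for $\{p\}$).
   Context: For $T\subseteq N$, $\mathbf{1}^T\in\mathbb{R}^N$ denotes the characteristic vector of $T$. A collection $\mathscr{B}$ of nonempty subsets of a finite set $N$ is balanced if there exist positive weights $(\lambda_S)_{S\in\mathscr{B}}$ (balancing weights) with $\sum_{S\in\mathscr{B}}\lambda_S\mathbf{1}^S=\mathbf{1}^N$. A balanced collection is minimal if it contains no balanced proper subcollection; equivalently, its system of balancing weights is unique. $[k]=\{1,\dots,k\}$. *)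

(* Defs.v *)
From HB Require Import structures.
From mathcomp Require Import all_boot all_order all_algebra.
From mathcomp Require Import reals.
Set Implicit Arguments. Unset Strict Implicit. Unset Printing Implicit Defensive.
Import Order.TTheory GRing.Theory Num.Theory.
Local Open Scope ring_scope.

Definition balancing_weights (R : realType) (T : finType) (N : {set T})
    (B : {set {set T}}) (lam : {set T} -> R) : Prop :=
  (forall S, S \in B -> 0 < lam S) /\
  (forall x : T, \sum_(S in B) lam S * (x \in S)%:R = (x \in N)%:R).

Definition balanced_on (R : realType) (T : finType) (N : {set T})
    (B : {set {set T}}) : Prop :=
  (forall S, S \in B -> S != set0 /\ S \subset N) /\
  exists lam : {set T} -> R, balancing_weights N B lam.

Definition minimal_balanced_on (R : realType) (T : finType) (N : {set T})
    (B : {set {set T}}) : Prop :=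
  balanced_on R N B /\ (forall B' : {set {set T}}, B' \proper B -> ~ balanced_on R N B').

(* Main.v *)
Require Import Defs.
From HB Require Import structures.
From mathcomp Require Import all_boot all_order all_algebra.
From mathcomp Require Import reals.
From mathcomp Require Import lra.
Import Order.TTheory GRing.Theory Num.Theory.
Local Open Scope ring_scope.
Set Implicit Arguments. Unset Strict Implicit.

Section U.
Variables (R : realType) (T : finType) (k : nat) (S : 'I_k -> {set T}).
Hypothesis injS : injective S.

Definition wt (w : 'I_k -> R) (X : {set T}) : R := \sum_i w i * (X == S i)%:R.

Lemma wtS w j : wt w (S j) = w j.
Proof.
rewrite /wt (bigD1 j) //= eqxx mulr1 big1 ?addr0 // => i hi.
by rewrite (inj_eq injS) eq_sym (negbTE hi) mulr0.
Qed.

Lemma sum_imS (P : {pred 'I_k}) (g : {set T} -> R) :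
  \sum_(X in [set S i | i in P]) g X = \sum_(i in P) g (S i).
Proof. by rewrite big_imset //; move=> i j _ _; apply: injS. Qed.

Lemma uniqW (N : {set T}) (lam nu : 'I_k -> R) :
  minimal_balanced_on R N [set S i | i in 'I_k] ->
  (forall i, 0 < lam i) ->
  (forall x, \sum_i lam i * (x \in S i)%:R = (x \in N)%:R) ->
  (forall x, \sum_i nu i * (x \in S i)%:R = (x \in N)%:R) ->
  forall i, nu i = lam i.
Proof.
move=> [[hmem _] hmin] lpos lbal nbal i.
have hS j : S j != set0 /\ S j \subset N by apply: hmem; apply: imset_f.
case: (eqVneq (nu i) (lam i)) => // hne; exfalso.
pose e j := nu j - lam j.
have ebal x : \sum_j e j * (x \in S j)%:R = 0.
  rewrite /e; under eq_bigr do rewrite mulrBl.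
  by rewrite sumrB lbal nbal subrr.
have [i0 hi0] : exists j, e j < 0.
  case: (boolP [exists j, e j < 0]) => [/existsP//|]; rewrite negb_exists => /forallP hall.
  have ege j : 0 <= e j by rewrite leNgt hall.
  have eip : 0 < e i by rewrite lt_def ege andbT /e subr_eq0.
  have [x xS] : exists x, x \in S i by apply/set0Pn; case: (hS i).
  have := ebal x; rewrite (bigD1 i) //= xS mulr1 => h.
  have : 0 < e i + \sum_(j | j != i) e j * (x \in S j)%:R.
    rewrite ltr_wpDr //; apply: sumr_ge0 => j _; apply: mulr_ge0 => //.
  by rewrite h ltxx.
pose r j := lam j / - e j.
case: (arg_minP r (hi0 : (fun j => e j < 0) i0)) => j0 hj0 hmin0.
pose t := r j0.
have tpos : 0 < t by rewrite /t /r divr_gt0 // oppr_gt0.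
pose w j := lam j + t * e j.
have wge j : 0 <= w j.
  case: (ltP (e j) 0) => hej.
    have := hmin0 j hej; rewrite /w /r -/t => ht.
    have : t * - e j <= lam j by rewrite -ler_pdivlMr // oppr_gt0.
    rewrite /w mulrN => h; lra.
  rewrite /w; apply: addr_ge0; first exact: ltW.
  by apply: mulr_ge0; [exact: ltW | exact: hej].
have wj0 : w j0 = 0.
  have ne : e j0 != 0 by rewrite lt_eqF.
  by rewrite /w /t /r invrN mulrN mulNr -mulrA mulVf // mulr1 subrr.
have wbal x : \sum_j w j * (x \in S j)%:R = (x \in N)%:R.
  rewrite /w; under eq_bigr do rewrite mulrDl -mulrA.
  by rewrite big_split /= -mulr_sumr ebal mulr0 addr0 lbal.
apply: (hmin [set S j | j in [set j | 0 < w j]]).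
  apply/properP; split.
    by apply/subsetP => X /imsetP [j _ ->]; apply: imset_f.
  exists (S j0); first exact: imset_f.
  apply/imsetP => -[j]; rewrite inE => hj /injS ej; subst j.
  by rewrite wj0 ltxx in hj.
split.
  by move=> X /imsetP [j _ ->]; apply: hS.
exists (wt w); split.
  by move=> X /imsetP [j]; rewrite inE => hj ->; rewrite wtS.
move=> x; rewrite sum_imS -wbal.
rewrite [RHS](bigID (fun j => j \in [set j | 0 < w j])) /=.
rewrite [X in _ + X]big1 ?addr0; last first.
  move=> j; rewrite inE -leNgt => hj.
  have -> : w j = 0 by apply/eqP; rewrite eq_le hj wge.
  by rewrite mul0r.
by apply: eq_bigr => j _; rewrite wtS.
Qed.
End U.

Theorem lemma4p2 (R : realType) (T : finType) (N : {set T}) (p : T)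
  (k : nat) (S : 'I_k -> {set T}) (lam : 'I_k -> R) (I : {set 'I_k}) :
  N != set0 -> p \notin N ->
  injective S ->
  minimal_balanced_on R N [set S i | i in 'I_k] ->
  (forall i, 0 < lam i) ->
  (forall x : T, \sum_(i < k) lam i * (x \in S i)%:R = (x \in N)%:R) ->
  \sum_(i in I) lam i < 1 ->
  let C' := [set S i :|: [set p] | i in I] :|: [set S i | i in ~: I]
            :|: [set [set p]] in
  let lam' := fun X : {set T} =>
     \sum_(i < k) lam i *
        (((i \in I) && (X == S i :|: [set p])) ||
         ((i \notin I) && (X == S i)))%:R
     + (1 - \sum_(i in I) lam i) * (X == [set p])%:R in
  minimal_balanced_on R (p |: N) C' /\ balancing_weights (p |: N) C' lam'.
Proof.
move=> hN hpN injS hmin lpos lbal hI C' lam'.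
have hS j : S j != set0 /\ S j \subset N.
  by case: hmin => -[hm _] _; apply: hm; apply: imset_f.
have pS j : p \notin S j.
  by apply/negP => /(subsetP (proj2 (hS j))); apply/negP.
pose X i := if i \in I then S i :|: [set p] else S i.
have hC' : C' = [set p] |: [set X i | i in 'I_k].
  apply/eqP; rewrite eqEsubset; apply/andP; split; apply/subsetP => Y.
    rewrite /C' !inE => /orP[/orP[/imsetP[i hi ->]|/imsetP[i hi ->]]|/eqP->].
    - by apply/orP; right; apply/imsetP; exists i => //; rewrite /X hi.
    - by rewrite inE in hi; apply/orP; right; apply/imsetP; exists i => //; rewrite /X (negbTE hi).
    - by rewrite eqxx.
  rewrite /C' !inE => /orP[/eqP->|/imsetP[i _ ->]]; first by rewrite eqxx orbT.
  rewrite /X; case: ifP => hi.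
    by apply/orP; left; apply/orP; left; apply/imsetP; exists i.
  by apply/orP; left; apply/orP; right; apply/imsetP; exists i; rewrite // inE hi.
have pX i : (p \in X i) = (i \in I).
  by rewrite /X; case: ifP => hi; rewrite ?inE ?eqxx ?orbT // (negbTE (pS i)).
have xX x i : x != p -> (x \in X i) = (x \in S i).
  by move=> hx; rewrite /X; case: ifP => _ //; rewrite !inE (negbTE hx) orbF.
have Xnp i : X i != [set p].
  apply/negP => /eqP h.
  case: (hS i) => /set0Pn [y hy] _.
  have : y \in X i by rewrite /X; case: ifP; rewrite ?inE ?hy.
  rewrite h inE => /eqP yp; subst y.
  by move: hy; rewrite (negbTE (pS i)).
have Xinj : injective X.
  move=> i j; rewrite /X.
  have rem (A : {set T}) : p \notin A -> (A :|: [set p]) :\ p = A.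
    move=> hA; apply/setP => y; rewrite !inE.
    by case: (eqVneq y p) => [->|]; rewrite ?(negbTE hA) //= orbF.
  case: ifP => hi; case: ifP => hj.
  - by move=> h; apply: injS; rewrite -(rem _ (pS i)) -(rem _ (pS j)) h.
  - move=> h; have : p \in S j by rewrite -h !inE eqxx orbT.
    by rewrite (negbTE (pS j)).
  - move=> h; have : p \in S i by rewrite h !inE eqxx orbT.
    by rewrite (negbTE (pS i)).
  - exact: injS.
have pnX : [set p] \notin [set X i | i in 'I_k].
  by apply/imsetP => -[i _ h]; move: (Xnp i); rewrite -h eqxx.
have sumC (h : {set T} -> R) :
    \sum_(Y in C') h Y = h [set p] + \sum_i h (X i).
  rewrite hC' big_setU1 //= big_imset //.
  by move=> i j _ _; apply: Xinj.
have lamE Y : lam' Y = wt X lam Y + (1 - \sum_(i in I) lam i) * (Y == [set p])%:R.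
  rewrite /lam' /wt; congr (_ + _); apply: eq_bigr => i _.
  by rewrite /X; case: (i \in I) => /=; rewrite ?andbF ?orbF ?andbT ?orbT /=.
have lamX i : lam' (X i) = lam i.
  by rewrite lamE (wtS Xinj) (negbTE (Xnp i)) mulr0 addr0.
have lamp : lam' [set p] = 1 - \sum_(i in I) lam i.
  rewrite lamE eqxx mulr1 /wt big1 ?add0r // => i _.
  by rewrite eq_sym (negbTE (Xnp i)) mulr0.
have sumI : \sum_i lam i * (i \in I)%:R = \sum_(i in I) lam i.
  by rewrite [RHS]big_mkcond /=; apply: eq_bigr => i _; case: (i \in I); rewrite ?mulr1 ?mulr0.
have bw : balancing_weights (p |: N) C' lam'.
  split.
    move=> Y; rewrite hC' !inE => /orP[/eqP ->|/imsetP[i _ ->]].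
      by rewrite lamp subr_gt0.
    by rewrite lamX.
  move=> x; rewrite sumC; under eq_bigr do rewrite lamX.
  rewrite lamp inE.
  case: (eqVneq x p) => [->|hx].
    under eq_bigr do rewrite pX.
    by rewrite sumI !inE eqxx /= mulr1 subrK.
  under eq_bigr do rewrite xX //.
  by rewrite lbal !inE (negbTE hx) /= mulr0 add0r.
split; last exact: bw.
split.
  split; last by exists lam'.
  move=> Y; rewrite hC' !inE => /orP[/eqP ->|/imsetP[i _ ->]].
    split; first by apply/set0Pn; exists p; rewrite inE.
    by apply/subsetP => y; rewrite !inE => ->.
  split; first by apply/set0Pn; case: (hS i) => /set0Pn[y hy] _; exists y;
    rewrite /X; case: ifP; rewrite ?inE ?hy.
  rewrite /X; case: ifP => _.
    by rewrite (setUC [set p] N); apply: setUSS; [exact: (proj2 (hS i)) | exact: subxx].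
  by apply: (subset_trans (proj2 (hS i))); apply/subsetP => y yN; rewrite inE yN orbT.
move=> B' /properP [sub [Z ZC ZB]] [_ [mu [mupos mubal]]].
pose G x Y := if Y \in B' then mu Y * (x \in Y)%:R else 0.
have hB x : \sum_(Y in C') G x Y = (x \in p |: N)%:R.
  rewrite -mubal -big_mkcondr; apply: eq_bigl => Y.
  by apply: andb_idl => /(subsetP sub).
pose nu i := if X i \in B' then mu (X i) else 0.
have GX x i : G x (X i) = nu i * (x \in X i)%:R.
  by rewrite /G /nu; case: ifP; rewrite ?mul0r.
have nbal x : \sum_i nu i * (x \in S i)%:R = (x \in N)%:R.
  case: (eqVneq x p) => [->|hx].
    rewrite (negbTE hpN) big1 // => i _; by rewrite (negbTE (pS i)) mulr0.
  have := hB x; rewrite sumC /G inE (negbTE hx) mulr0 if_same add0r.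
  rewrite !inE (negbTE hx) /= => <-; apply: eq_bigr => i _.
  rewrite -xX //; exact: (esym (GX x i)).
have nuE := uniqW injS hmin lpos lbal nbal.
have XB i : X i \in B'.
  apply/negPn/negP => hn; have := nuE i; rewrite /nu (negbTE hn) => h.
  by move: (lpos i); rewrite -h ltxx.
have muX i : mu (X i) = lam i by rewrite -nuE /nu XB.
have pB : [set p] \notin B'.
  move: ZC ZB; rewrite hC' !inE => /orP[/eqP ->//|/imsetP[i _ ->]].
  by rewrite XB.
have := hB p; rewrite sumC /G (negbTE pB) add0r !inE eqxx /=.
under eq_bigr do rewrite XB muX pX.
by rewrite sumI => h; move: hI; rewrite h ltxx.
Qed.
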